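(* Let $M$ be a graded quasi-primaryful $R$-module. Then the set of all irreducible components of $qp.Spec_g(M)$ (quasi-Zariski topology) is $$\Phi=\{qp\text{-}V_M^g(Gr(q)M)\mid q\in qp\text{-}V_R^g(\mathrm{Ann}(M))\text{ and }Gr(q)\text{ is a minimal element of }V_R^g(\mathrm{Ann}(M))\text{ with respect to inclusion}\}.$$
   Context: $R=\bigoplus_{g\in G}R_g$ is a graded commutative ring with identity graded by a group $G$, $h(R)=\bigcup_g R_g$; $M$ is a graded $R$-module, $h(M)$ its homogeneous elements. $Gr(I)$ is the graded radical of a graded ideal $I$. $(K:_RM)=\{r: rM\subseteq K\}$. Graded prime submodule: proper graded $P$ with $rm\in P$ ($r\in h(R), m\in h(M)$) implying $m\in P$ or $r\in(P:_RM)$. $Gr_M(K)$: intersection of graded prime submodules containing $K$ ($M$ if none). Graded primeful property of $K$: for each graded prime $p\supseteq(K:_RM)$ there is a graded prime submodule $P\supseteq K$ with $(P:_RM)=p$. Graded quasi-primary submodule: proper graded $Q$ with $rm\in Q$ ($r\in h(R),m\in h(M)$) implying $r\in Gr((Q:_RM))$ or $m\in Gr_M(Q)$. $qp.Spec_g(M)$: graded quasi-primary submodules with the graded primeful property. $qp\text{-}V_M^g(K)=\{Q\in qp.Spec_g(M): Gr((Q:_RM))\supseteq Gr((K:_RM))\}$; the quasi-Zariski topology has closed sets exactly these. A graded quasi-primary ideal of $R$ is a proper graded ideal $q$ with $ab\in q$ ($a,b\in h(R)$) implying $a\in Gr(q)$ or $b\in Gr(q)$. For a graded ideal $I$: $qp\text{-}V_R^g(I)$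 is the set of graded quasi-primary ideals of $R$ containing $I$, and $V_R^g(I)$ the set of graded prime ideals of $R$ containing $I$. $M$ is graded quasi-primaryful if $M=0$, or $M\ne 0$ and for every $q\in qp\text{-}V_R^g(\mathrm{Ann}(M))$ there is $Q\in qp.Spec_g(M)$ with $Gr((Q:_RM))=Gr(q)$. An irreducible component is a maximal irreducible subset (a subset $A$ is irreducible if $A\subseteq A_1\cup A_2$, $A_i$ closed, implies $A\subseteq A_1$ or $A\subseteq A_2$). *)

(* Defs.v *)
From mathcomp Require Import all_boot all_algebra.
From Stdlib Require Import List.
Set Implicit Arguments. Unset Strict Implicit. Unset Printing Implicit Defensive.
Import GRing.Theory.
Local Open Scope ring_scope.

Record group_law (G : Type) := GroupLaw {
  gmul : G -> G -> G; gone : G; ginv : G -> G;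
  gmulA : forall x y z, gmul x (gmul y z) = gmul (gmul x y) z;
  gmul1 : forall x, gmul gone x = x;
  gmulV : forall x, gmul (ginv x) x = gone }.

(* r = sum_{g in s} f g is a decomposition into homogeneous components of
   pairwise distinct degrees (for the family of subgroups A g). *)
Definition hdecomp (G : Type) (T : zmodType) (A : G -> T -> Prop)
  (s : list G) (f : G -> T) (x : T) : Prop :=
  NoDup s /\ (forall g, A g (f g)) /\ x = \sum_(g <- s) f g.

(* A family of additive subgroups whose (internal) sum is direct and is everything. *)
Definition direct_decomposition (G : Type) (T : zmodType) (A : G -> T -> Prop) :=
  (forall g, A g 0 /\ forall x y, A g x -> A g y -> A g (x - y)) /\
  (forall x, exists s f, hdecomp A s f x) /\
  (forall s f, hdecomp A s f 0 -> forall g, In g s -> f g = 0).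

Record graded_ring (G : Type) (GL : group_law G) (R : comPzRingType) := GradedRing {
  rcomp : G -> R -> Prop;
  rcomp_direct : direct_decomposition rcomp;
  rcomp_mul : forall g h x y, rcomp g x -> rcomp h y -> rcomp (gmul GL g h) (x * y) }.

Record graded_module (G : Type) (GL : group_law G) (R : comPzRingType)
    (GR : graded_ring GL R) (M : lmodType R) := GradedModule {
  mcomp : G -> M -> Prop;
  mcomp_direct : direct_decomposition mcomp;
  mcomp_scale : forall g h r m, rcomp GR g r -> mcomp h m -> mcomp (gmul GL g h) (r *: m) }.

Section Defs.
Variables (G : Type) (GL : group_law G) (R : comPzRingType) (GR : graded_ring GL R).
Variables (M : lmodType R) (GM : graded_module GR M).

Definition subset (T : Type) (A B : T -> Prop) := forall x, A x -> B x.

Definition hR (r : R) := exists g, rcomp GR g r.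
Definition hM (m : M) := exists g, mcomp GM g m.

Definition graded_set (T : zmodType) (A : G -> T -> Prop) (N : T -> Prop) :=
  forall s f x, hdecomp A s f x -> N x -> forall g, In g s -> N (f g).

Definition is_ideal (I : R -> Prop) :=
  I 0 /\ (forall x y, I x -> I y -> I (x + y)) /\ (forall r x, I x -> I (r * x)).
Definition graded_ideal (I : R -> Prop) := is_ideal I /\ graded_set (rcomp GR) I.

Definition is_submodule (N : M -> Prop) :=
  N 0 /\ (forall x y, N x -> N y -> N (x + y)) /\ (forall r x, N x -> N (r *: x)).
Definition graded_submodule (N : M -> Prop) :=
  is_submodule N /\ graded_set (mcomp GM) N.

Definition Gr (I : R -> Prop) : R -> Prop := fun r =>
  forall s f, hdecomp (rcomp GR) s f r ->
    forall g, In g s -> exists n, (0 < n)%N /\ I (f g ^+ n).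

Definition colon (K : M -> Prop) : R -> Prop := fun r => forall m, K (r *: m).
Definition Ann : R -> Prop := colon (fun m => m = 0).

Definition graded_prime_ideal (p : R -> Prop) :=
  graded_ideal p /\ ~ p 1 /\
  forall a b, hR a -> hR b -> p (a * b) -> p a \/ p b.

Definition graded_qprimary_ideal (q : R -> Prop) :=
  graded_ideal q /\ ~ q 1 /\
  forall a b, hR a -> hR b -> q (a * b) -> Gr q a \/ Gr q b.

Definition proper_sub (N : M -> Prop) := exists m, ~ N m.

Definition graded_prime_submodule (P : M -> Prop) :=
  graded_submodule P /\ proper_sub P /\
  forall r m, hR r -> hM m -> P (r *: m) -> P m \/ colon P r.

(* Gr_M(K): intersection of graded prime submodules containing K (M if none) *)
Definition GrM (K : M -> Prop) : M -> Prop := fun m =>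
  forall P, graded_prime_submodule P -> subset K P -> P m.

Definition graded_primeful (K : M -> Prop) :=
  forall p, graded_prime_ideal p -> subset (colon K) p ->
    exists P, graded_prime_submodule P /\ subset K P /\ colon P = p.

Definition graded_qprimary_submodule (Q : M -> Prop) :=
  graded_submodule Q /\ proper_sub Q /\
  forall r m, hR r -> hM m -> Q (r *: m) -> Gr (colon Q) r \/ GrM Q m.

Definition qpSpec : (M -> Prop) -> Prop := fun Q =>
  graded_qprimary_submodule Q /\ graded_primeful Q.

Definition qpV_M (K : M -> Prop) : (M -> Prop) -> Prop := fun Q =>
  qpSpec Q /\ subset (Gr (colon K)) (Gr (colon Q)).

Definition qpV_R (I : R -> Prop) : (R -> Prop) -> Prop := fun q =>
  graded_qprimary_ideal q /\ subset I q.
Definition V_R (I : R -> Prop) : (R -> Prop) -> Prop := fun p =>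
  graded_prime_ideal p /\ subset I p.

Definition idealM (I : R -> Prop) : M -> Prop := fun m =>
  exists s : list (R * M), (forall p, In p s -> I p.1) /\
    m = \sum_(p <- s) p.1 *: p.2.

Definition graded_qprimaryful :=
  (forall m : M, m = 0) \/
  ((exists m : M, m <> 0) /\
   forall q, qpV_R Ann q -> exists Q, qpSpec Q /\ Gr (colon Q) = Gr q).

Definition qp_closed (A : (M -> Prop) -> Prop) :=
  exists K, graded_submodule K /\ A = qpV_M K.

Definition qp_irreducible (A : (M -> Prop) -> Prop) :=
  subset A qpSpec /\ (exists Q, A Q) /\
  forall A1 A2, qp_closed A1 -> qp_closed A2 ->
    subset A (fun Q => A1 Q \/ A2 Q) -> subset A A1 \/ subset A A2.

Definition qp_irreducible_component (A : (M -> Prop) -> Prop) :=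
  qp_irreducible A /\ forall B, qp_irreducible B -> subset A B -> B = A.

Definition Phi : ((M -> Prop) -> Prop) -> Prop := fun A =>
  exists q, qpV_R Ann q /\
    (V_R Ann (Gr q) /\ forall p, V_R Ann p -> subset p (Gr q) -> p = Gr q) /\
    A = qpV_M (idealM (Gr q)).

End Defs.

(* Main.v *)
Require Import Defs.
From Stdlib Require Import List Classical ClassicalEpsilon FunctionalExtensionality PropExtensionality.
From mathcomp Require Import all_boot all_algebra.
From mathcomp Require classical_sets.
Set Implicit Arguments. Unset Strict Implicit. Unset Printing Implicit Defensive.
Import GRing.Theory.
Local Open Scope ring_scope.

Lemma predext (T : Type) (P Q : T -> Prop) : (forall x, P x <-> Q x) -> P = Q.
Proof. move=> H; apply: functional_extensionality => x; apply: propositional_extensionality; exact: H. Qed.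

Section Generic.
Variables (G : Type) (T : zmodType) (A : G -> T -> Prop).
Hypothesis HA : direct_decomposition A.

Definition indec (g : G) (s : list G) : {In g s} + {~ In g s} := excluded_middle_informative _.
Definition eqdec (g h : G) : {g = h} + {g <> h} := excluded_middle_informative _.
Definition inb g s : bool := if indec g s then true else false.
Definition rst (s : list G) (f : G -> T) g := if indec g s then f g else 0.

Lemma A0 g : A g 0. Proof. by case: HA => [H _]; case: (H g). Qed.
Lemma AB g x y : A g x -> A g y -> A g (x - y). Proof. by case: HA => [H _]; case: (H g) => _; apply. Qed.
Lemma AN g x : A g x -> A g (- x). Proof. by move=> Hx; rewrite -sub0r; apply: AB => //; apply: A0. Qed.
Lemma AD g x y : A g x -> A g y -> A g (x + y).
Proof. by move=> Hx Hy; rewrite -(opprK y); apply: AB => //; apply: AN. Qed.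
Lemma rstA s f g : (forall g, A g (f g)) -> A g (rst s f g).
Proof. move=> H; rewrite /rst; destruct (indec g s); [apply: H|apply: A0]. Qed.

Lemma sum_delta (a : G) (c : T) (t : list G) :
  ~ In a t -> \sum_(g <- t) (if eqdec g a then c else 0) = 0.
Proof.
elim: t => [|b t IH] /= Ha; first by rewrite big_nil.
rewrite big_cons IH; last by tauto.
by case: (eqdec b a) => [E|NE]; [exfalso; apply: Ha; left|rewrite addr0].
Qed.

Lemma sum_delta1 (a : G) (c : T) (t : list G) :
  NoDup t -> In a t -> \sum_(g <- t) (if eqdec g a then c else 0) = c.
Proof.
elim: t => [|b t IH] // ND /= Ha; rewrite big_cons.
case/NoDup_cons_iff: ND => Nbt NDt.
case: (eqdec b a) => [E|NE].
  by subst; rewrite sum_delta // addr0.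
by rewrite add0r IH //; case: Ha => // E; exfalso; apply: NE.
Qed.

Lemma sum_in (t : list G) (F F' : G -> T) :
  (forall g, In g t -> F g = F' g) -> \sum_(g <- t) F g = \sum_(g <- t) F' g.
Proof.
elim: t => [|b t IH] H; first by rewrite !big_nil.
rewrite !big_cons H /=; last by left.
by rewrite IH // => g Hg; apply: H; right.
Qed.

Lemma sum_rst s t f : NoDup s -> NoDup t -> incl s t ->
  \sum_(g <- t) rst s f g = \sum_(g <- s) f g.
Proof.
elim: s => [|a s IH] NDs NDt Hi.
  rewrite big_nil big1 // => g _; rewrite /rst; by case: (indec g nil) => [[]|].
case/NoDup_cons_iff: NDs => Nas NDs'.
have E : forall g, rst (a :: s) f g = (if eqdec g a then f a else 0) + rst s f g.
  move=> g; rewrite /rst; case: (eqdec g a) => [E|NE].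
    subst g; case: (indec a (a :: s)) => [I1|N1]; last by exfalso; apply: N1; left.
    by case: (indec a s) => [I2|N2]; [exfalso; apply: Nas|rewrite addr0].
  rewrite add0r; case: (indec g (a :: s)) => [[E|I]|NI].
  - by exfalso; apply: NE.
  - by case: (indec g s).
  by case: (indec g s) => // I; exfalso; apply: NI; right.
under eq_bigr => g _ do rewrite E.
rewrite big_split /= big_cons sum_delta1 //; last by apply: Hi; left.
by rewrite IH // => g Hg; apply: Hi; right.
Qed.

Definition union (s s' : list G) := s ++ List.filter (fun g => ~~ inb g s) s'.

Lemma union_ND s s' : NoDup s -> NoDup s' -> NoDup (union s s').
Proof.
move=> N1 N2; apply: NoDup_app => //; first exact: NoDup_filter.
move=> a Ha /filter_In [_]; rewrite /inb; by case: indec.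
Qed.
Lemma union_l s s' : incl s (union s s'). Proof. by move=> g Hg; apply/in_or_app; left. Qed.
Lemma union_r s s' : incl s' (union s s').
Proof.
move=> g Hg; apply/in_or_app; case: (indec g s) => H; [by left|right].
by apply/filter_In; split => //; rewrite /inb; case: indec.
Qed.
Lemma union_in s s' g : In g (union s s') -> In g s \/ In g s'.
Proof. move=> H; case: (in_app_or _ _ _ H) => [I|/filter_In [I _]]; auto. Qed.

Lemma hd_uniq s f s' f' x : hdecomp A s f x -> hdecomp A s' f' x ->
  forall g, rst s f g = rst s' f' g.
Proof.
move=> [N1 [A1 E1]] [N2 [A2 E2]] g.
case: HA => _ [_ U].
pose t := union s s'.
have H0 : hdecomp A t (fun g => rst s f g - rst s' f' g) 0.
  split; first exact: union_ND.
  split; first by move=> h; apply: AB; apply: rstA.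
  rewrite sumrB !sum_rst //; [|exact: union_ND|exact: union_r|exact: union_ND|exact: union_l].
  by rewrite -E1 -E2 subrr.
case: (indec g t) => It.
  by move/eqP: (U _ _ H0 g It); rewrite subr_eq0 => /eqP.
rewrite /rst; case: indec => I1; first by exfalso; apply: It; apply: union_l.
by case: indec => I2 //; exfalso; apply: It; apply: union_r.
Qed.

Definition supp (x : T) : list G :=
  proj1_sig (constructive_indefinite_description _ (proj1 (proj2 HA) x)).
Definition fsupp (x : T) : G -> T :=
  proj1_sig (constructive_indefinite_description _
    (proj2_sig (constructive_indefinite_description _ (proj1 (proj2 HA) x)))).
Lemma hd_supp x : hdecomp A (supp x) (fsupp x) x.
Proof.
rewrite /fsupp /supp.
case: (constructive_indefinite_description _ _) => s /= Hs.
by case: (constructive_indefinite_description _ _).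
Qed.

Definition comp x g := rst (supp x) (fsupp x) g.

Lemma comp_spec s f x g : hdecomp A s f x -> comp x g = rst s f g.
Proof. by move=> H; rewrite /comp; exact: (hd_uniq (hd_supp x) H). Qed.

Lemma compA x g : A g (comp x g).
Proof. by apply: rstA; case: (hd_supp x) => _ []. Qed.

Lemma comp_out x g : ~ In g (supp x) -> comp x g = 0.
Proof. by rewrite /comp /rst; case: indec. Qed.

Lemma supp_ND x : NoDup (supp x). Proof. by case: (hd_supp x). Qed.

Lemma comp_sum x : x = \sum_(g <- supp x) comp x g.
Proof.
case: (hd_supp x) => N [_ E]; rewrite /comp sum_rst //; exact: incl_refl.
Qed.

Lemma hd_comp x : hdecomp A (supp x) (comp x) x.
Proof. split; first exact: supp_ND. split; [exact: compA| exact: comp_sum]. Qed.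

Lemma comp_eq t F x : NoDup t -> (forall g, A g (F g)) -> (forall g, ~ In g t -> F g = 0) ->
  x = \sum_(g <- t) F g -> forall g, comp x g = F g.
Proof.
move=> N HF Hv E g; rewrite (@comp_spec t F) //; rewrite /rst.
by case: indec => // I; rewrite Hv.
Qed.

Lemma comp_in s f x g : hdecomp A s f x -> In g s -> comp x g = f g.
Proof. by move=> H I; rewrite (comp_spec g H) /rst; case: indec. Qed.

Lemma comp0 g : comp 0 g = 0.
Proof. by apply: (@comp_eq nil (fun _ => 0)) => //; [constructor|move=> *; apply: A0|rewrite big_nil]. Qed.

Lemma sum_vanish (t t' : list G) (F : G -> T) : NoDup t -> NoDup t' -> incl t t' -> (forall g, ~ In g t -> F g = 0) ->
  \sum_(g <- t') F g = \sum_(g <- t) F g.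
Proof.
move=> N N' I V; rewrite -(@sum_rst t t') //; apply: sum_in => g _; rewrite /rst.
by case: (indec g t) => [It|NI] //; rewrite V.
Qed.

Lemma compD x y g : comp (x + y) g = comp x g + comp y g.
Proof.
move: g; apply: (@comp_eq (union (supp x) (supp y))).
- by apply: union_ND; apply: supp_ND.
- by move=> g; apply: AD; apply: compA.
- move=> g Hg; rewrite !comp_out ?addr0 // => I; apply: Hg; [apply: union_r|apply: union_l] => //.
have NU : NoDup (union (supp x) (supp y)) by apply: union_ND; apply: supp_ND.
rewrite big_split /= (@sum_vanish (supp x) _ (comp x)); last first.
- by move=> g; apply: comp_out.
- exact: union_l.
- exact: NU.
- exact: supp_ND.
rewrite (@sum_vanish (supp y) _ (comp y)); last first.
- by move=> g; apply: comp_out.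
- exact: union_r.
- exact: NU.
- exact: supp_ND.
by rewrite -!comp_sum.
Qed.

Lemma compN x g : comp (- x) g = - comp x g.
Proof. by apply/eqP; rewrite -subr_eq0 opprK -compD addNr comp0. Qed.

Lemma comp_suml (I : Type) (l : list I) (y : I -> T) g :
  comp (\sum_(i <- l) y i) g = \sum_(i <- l) comp (y i) g.
Proof.
elim: l => [|i l IH]; first by rewrite !big_nil comp0.
by rewrite !big_cons compD IH.
Qed.

Lemma comp_hom h x : A h x -> forall g, comp x g = if eqdec g h then x else 0.
Proof.
move=> Hx; apply: (@comp_eq [:: h]).
- by constructor; [case|constructor].
- by move=> g; case: (eqdec g h) => [E|NE] //; [subst|apply: A0].
- by move=> g; case: (eqdec g h) => [E|NE] // []; left.
by rewrite big_cons big_nil addr0; case: (eqdec h h).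
Qed.

Lemma gsetP (N : T -> Prop) : N 0 ->
  (graded_set A N <-> forall x, N x -> forall g, N (comp x g)).
Proof.
move=> N0; split.
  move=> H x Nx g; case: (indec g (supp x)) => I.
    exact: (H _ _ _ (hd_comp x) Nx g I).
  by rewrite comp_out.
by move=> H s f x Hd Nx g I; rewrite -(comp_in Hd I); apply: H.
Qed.

Lemma sum_closed (N : T -> Prop) : N 0 -> (forall x y, N x -> N y -> N (x + y)) ->
  forall (I : Type) (l : list I) (y : I -> T), (forall i, In i l -> N (y i)) -> N (\sum_(i <- l) y i).
Proof.
move=> N0 ND I l y; elim: l => [|i l IH] H; first by rewrite big_nil.
by rewrite big_cons; apply: ND; [apply: H; left|apply: IH => j Hj; apply: H; right].
Qed.

Lemma recompose (N : T -> Prop) x : N 0 -> (forall x y, N x -> N y -> N (x + y)) ->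
  (forall g, N (comp x g)) -> N x.
Proof. by move=> N0 ND H; rewrite (comp_sum x); apply: sum_closed. Qed.

Lemma comp_reindex (d dinv : G -> G) (F : G -> T) s x :
  (forall g, dinv (d g) = g) -> (forall g, d (dinv g) = g) ->
  NoDup s -> (forall j, A (d j) (F j)) -> (forall j, ~ In j s -> F j = 0) ->
  x = \sum_(j <- s) F j -> forall g, comp x g = F (dinv g).
Proof.
move=> K1 K2 N HF V E; apply: (@comp_eq (List.map d s)).
- apply: NoDup_map_NoDup_ForallPairs => //.
  by move=> a b _ _ Eab; rewrite -(K1 a) Eab K1.
- by move=> g; move: (HF (dinv g)); rewrite K2.
- move=> g Hg; apply: V => I; apply: Hg; rewrite -(K2 g); exact: in_map.
rewrite E; elim: s {N V E} => [|a s IH] /=; first by rewrite !big_nil.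
by rewrite !big_cons K1 IH.
Qed.

End Generic.

Section Ring.
Variables (G : Type) (GL : group_law G) (R : comPzRingType) (GR : graded_ring GL R).
Variables (M : lmodType R) (GM : graded_module GR M).

Local Notation "x ** y" := (gmul GL x y) (at level 40).
Local Notation e := (gone GL).
Local Notation inv := (ginv GL).

Lemma gmulVr g : g ** inv g = e.
Proof.
have H : inv (inv g) ** inv g = e by apply: gmulV.
rewrite -(gmul1 GL (g ** inv g)) -{1}H -gmulA (gmulA GL (inv g)) gmulV gmul1.
exact: H.
Qed.
Lemma gmul1r g : g ** e = g.
Proof. by rewrite -(gmulV GL g) gmulA gmulVr gmul1. Qed.

Let RD := rcomp_direct GR.
Let MD := mcomp_direct GM.
Definition rc (x : R) (g : G) : R := comp RD x g.
Definition mc (x : M) (g : G) : M := comp MD x g.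

Lemma rcA x g : rcomp GR g (rc x g). Proof. exact: compA. Qed.
Lemma mcA x g : mcomp GM g (mc x g). Proof. exact: compA. Qed.

Lemma rc_mull k a x g : rcomp GR k a -> rc (a * x) g = a * rc x (inv k ** g).
Proof.
move=> Ha; apply: (@comp_reindex _ _ _ RD (gmul GL k) (gmul GL (inv k)) (fun j => a * rc x j) (supp RD x)).
- by move=> h; rewrite gmulA gmulV gmul1.
- by move=> h; rewrite gmulA gmulVr gmul1.
- exact: supp_ND.
- by move=> j; apply: rcomp_mul => //; apply: rcA.
- by move=> j Hj; rewrite /rc comp_out // mulr0.
by rewrite {1}(comp_sum RD x) mulr_sumr.
Qed.

Lemma mc_scalel k a m g : rcomp GR k a -> mc (a *: m) g = a *: mc m (inv k ** g).
Proof.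
move=> Ha; apply: (@comp_reindex _ _ _ MD (gmul GL k) (gmul GL (inv k)) (fun j => a *: mc m j) (supp MD m)).
- by move=> h; rewrite gmulA gmulV gmul1.
- by move=> h; rewrite gmulA gmulVr gmul1.
- exact: supp_ND.
- by move=> j; apply: mcomp_scale => //; apply: mcA.
- by move=> j Hj; rewrite /mc comp_out // scaler0.
by rewrite {1}(comp_sum MD m) scaler_sumr.
Qed.

Lemma mc_scaler h r m g : mcomp GM h m -> mc (r *: m) g = rc r (g ** inv h) *: m.
Proof.
move=> Hm; apply: (@comp_reindex _ _ _ MD (fun j => j ** h) (fun j => j ** inv h) (fun j => rc r j *: m) (supp RD r)).
- by move=> j; rewrite -gmulA gmulVr gmul1r.
- by move=> j; rewrite -gmulA gmulV gmul1r.
- exact: supp_ND.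
- by move=> j; apply: mcomp_scale => //; apply: rcA.
- by move=> j Hj; rewrite /rc comp_out // scale0r.
by rewrite {1}(comp_sum RD r) scaler_suml.
Qed.

Definition rad (I : R -> Prop) (r : R) := exists n, (0 < n)%N /\ I (r ^+ n).

Lemma ideal0 (I : R -> Prop) : is_ideal I -> I 0. Proof. by case. Qed.
Lemma idealD (I : R -> Prop) x y : is_ideal I -> I x -> I y -> I (x + y). Proof. by case=> _ [H _]; apply: H. Qed.
Lemma idMul (I : R -> Prop) r x : is_ideal I -> I x -> I (r * x). Proof. by case=> _ [_ H]; apply: H. Qed.
Lemma idealMr (I : R -> Prop) r x : is_ideal I -> I x -> I (x * r). Proof. by move=> HI Hx; rewrite mulrC; apply: idMul. Qed.
Lemma idealMn (I : R -> Prop) x n : is_ideal I -> I x -> I (x *+ n).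
Proof.
move=> HI Hx; elim: n => [|n IH]; first by rewrite mulr0n; apply: ideal0.
by rewrite mulrS; apply: idealD.
Qed.

Lemma rad_add (I : R -> Prop) a b : is_ideal I -> rad I a -> rad I b -> rad I (a + b).
Proof.
move=> HI [n [n0 Ha]] [m [m0 Hb]]; exists (n + m)%N; split; first by rewrite addn_gt0 n0.
rewrite exprDn; elim/big_ind: _ => [|x y|[i Hi] _ /=]; first exact: ideal0.
  by apply: idealD.
apply: idealMn => //.
case: (leqP m i) => Hmi.
  rewrite (_ : b ^+ i = b ^+ m * b ^+ (i - m)); last by rewrite -exprD subnKC.
  by rewrite mulrCA; apply: idealMr.
have Hn : (n <= n + m - i)%N by rewrite -addnBA ?leq_addr // ltnW.
rewrite (_ : a ^+ (n + m - i) = a ^+ n * a ^+ (n + m - i - n)); last by rewrite -exprD subnKC.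
by rewrite -mulrA; apply: idealMr.
Qed.

Lemma rad0 (I : R -> Prop) : is_ideal I -> rad I 0.
Proof. by move=> HI; exists 1%N; rewrite expr1; split => //; apply: ideal0. Qed.

Lemma rad_sum (I : R -> Prop) (J : Type) (l : list J) (y : J -> R) : is_ideal I ->
  (forall i, In i l -> rad I (y i)) -> rad I (\sum_(i <- l) y i).
Proof.
move=> HI; apply: sum_closed; first exact: rad0.
by move=> x z; apply: rad_add.
Qed.

Lemma GrE (I : R -> Prop) r : I 0 -> (Gr GR I r <-> forall g, rad I (rc r g)).
Proof.
move=> I0; split.
  move=> H g; case: (indec g (supp RD r)) => Hg.
    by case: (H _ _ (hd_comp RD r) g Hg) => n [n0 Hn]; exists n.
  by rewrite /rc comp_out //; exists 1%N; rewrite expr1.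
move=> H s f Hd g Hg; rewrite -(comp_in RD Hd Hg).
by case: (H g) => n [n0 Hn]; exists n.
Qed.

Lemma Gr_rad (I : R -> Prop) r : is_ideal I -> Gr GR I r -> rad I r.
Proof.
move=> HI /(GrE _ (ideal0 HI)) H; rewrite (comp_sum RD r).
by apply: rad_sum => // i _; apply: H.
Qed.

Lemma Gr_hom (I : R -> Prop) k a : I 0 -> rcomp GR k a -> (Gr GR I a <-> rad I a).
Proof.
move=> I0 Ha; rewrite GrE //; split.
  by move/(_ k); rewrite /rc (comp_hom RD Ha); case: (eqdec k k).
move=> H g; rewrite /rc (comp_hom RD Ha); case: (eqdec g k) => // NE.
by exists 1%N; rewrite expr1.
Qed.

Lemma hR_exp (a : R) n : hR GR a -> hR GR (a ^+ n.+1).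
Proof.
move=> [k Hk]; elim: n => [|n [h Hh]]; first by exists k; rewrite expr1.
by exists (k ** h); rewrite exprS; apply: rcomp_mul.
Qed.

Lemma Gr_ideal (I : R -> Prop) : graded_ideal GR I -> graded_ideal GR (Gr GR I).
Proof.
move=> [HI HgI]; have I0 := ideal0 HI.
have G0 : Gr GR I 0 by apply/GrE => // g; rewrite /rc comp0; exact: rad0.
have GD : forall x y, Gr GR I x -> Gr GR I y -> Gr GR I (x + y).
  move=> x y /(GrE _ I0) Hx /(GrE _ I0) Hy; apply/GrE => // g.
  by rewrite /rc compD; apply: rad_add.
have GMh : forall k a x, rcomp GR k a -> Gr GR I x -> Gr GR I (a * x).
  move=> k a x Ha /(GrE _ I0) Hx; apply/GrE => // g; rewrite (rc_mull _ _ Ha).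
  case: (Hx (inv k ** g)) => n [n0 Hn]; exists n; split => //.
  by rewrite exprMn; apply: idMul.
split; first split => //; first split => //.
  move=> r x Hx; rewrite (comp_sum RD r) mulr_suml.
  apply: sum_closed => // j Hj; apply: (GMh j); first exact: rcA.
  done.
apply/(gsetP RD) => // x /(GrE _ I0) Hx g; apply/GrE => // g'.
rewrite /rc (comp_hom RD (compA RD x g)); case: (eqdec g' g) => [E|NE]; [exact: Hx|exact: rad0].
Qed.

Lemma Gr_incl (I : R -> Prop) : graded_ideal GR I -> forall x, I x -> Gr GR I x.
Proof.
move=> [HI HgI] x Hx; have I0 := ideal0 HI; apply/GrE => // g.
exists 1%N; rewrite expr1; split => //.
by move/(gsetP RD): HgI => /(_ I0) H; apply: H.
Qed.

Lemma Gr_mono (I J : R -> Prop) x : (forall y, I y -> J y) -> Gr GR I x -> Gr GR J x.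
Proof.
move=> IJ H s f Hd g Hg; case: (H s f Hd g Hg) => n [n0 Hn]; exists n; split => //; exact: IJ.
Qed.

Lemma prime_rad (p : R -> Prop) a : graded_prime_ideal GR p -> hR GR a -> rad p a -> p a.
Proof.
move=> [_ [_ Hp]] Ha [n [n0 Hn]]; case: n n0 Hn => // n _.
elim: n => [|n IH]; first by rewrite expr1.
rewrite exprS => H; case: (Hp _ _ Ha (hR_exp n Ha) H) => //; exact: IH.
Qed.

Lemma Gr_prime (p : R -> Prop) x : graded_prime_ideal GR p -> Gr GR p x -> p x.
Proof.
move=> Hp; have [[HI _] _] := Hp; have I0 := ideal0 HI.
move/(GrE _ I0) => H; apply: (recompose (HA:=RD)) => //; first by move=> ? ?; apply: idealD.
by move=> g; apply: (prime_rad Hp); [exists g; apply: rcA|apply: H].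
Qed.

Lemma sub0 (N : M -> Prop) : is_submodule N -> N 0. Proof. by case. Qed.
Lemma subD (N : M -> Prop) x y : is_submodule N -> N x -> N y -> N (x + y). Proof. by case=> _ [H _]; apply: H. Qed.
Lemma subZ (N : M -> Prop) r x : is_submodule N -> N x -> N (r *: x). Proof. by case=> _ [_ H]; apply: H. Qed.

Lemma colon_ideal (Q : M -> Prop) : graded_submodule GM Q -> graded_ideal GR (colon Q).
Proof.
move=> [HQ HgQ]; have C0 : colon Q 0 by move=> m; rewrite scale0r; apply: sub0.
split; first split => //; first split.
- by move=> x y Hx Hy m; rewrite scalerDl; apply: subD.
- by move=> r x Hx m; rewrite -scalerA; apply: subZ.
apply/(gsetP RD) => // r Hr g m; rewrite (comp_sum MD m) scaler_sumr.
apply: sum_closed; first exact: sub0.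
  by move=> ? ?; apply: subD.
move=> h _; move/(gsetP MD): HgQ => /(_ (sub0 HQ)) HgQ.
have H := HgQ _ (Hr (mc m h)) (g ** h).
rewrite -[comp MD _ _]/(mc _ _) (mc_scaler _ _ (mcA m h)) -gmulA gmulVr gmul1r in H.
exact: H.
Qed.

Lemma all_hom (P : M -> Prop) : is_submodule P -> (forall m, hM GM m -> P m) -> forall m, P m.
Proof.
move=> HP H m; apply: (recompose (HA:=MD)); [exact: sub0|by move=> ? ?; apply: subD|].
by move=> g; apply: H; exists g; apply: mcA.
Qed.

End Ring.

Section Main.
Variables (G : Type) (GL : group_law G) (R : comPzRingType) (GR : graded_ring GL R).
Variables (M : lmodType R) (GM : graded_module GR M).

Local Notation "x ** y" := (gmul GL x y) (at level 40).
Local Notation inv := (ginv GL).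
Let RD := rcomp_direct GR.
Let MD := mcomp_direct GM.

Lemma Ja_ideal (p : R -> Prop) k a : graded_ideal GR p -> rcomp GR k a ->
  graded_ideal GR (fun r => exists x y, p x /\ r = x + y * a).
Proof.
move=> [Hp Hgp] Ha; have p0 := ideal0 Hp.
have J0 : exists x y, p x /\ (0 : R) = x + y * a by exists 0, 0; rewrite mul0r addr0.
split; first split => //; first split.
- move=> r1 r2 [x [y [px ->]]] [x' [y' [px' ->]]]; exists (x + x'), (y + y'); split.
    exact: idealD.
  by rewrite mulrDl addrACA.
- move=> r r1 [x [y [px ->]]]; exists (r * x), (r * y); split; first exact: idMul.
  by rewrite mulrDr mulrA.
apply/(gsetP RD) => // r [x [y [px ->]]] g.
rewrite compD -[comp RD (y * a) g]/(rc GR (y * a) g) mulrC (rc_mull _ _ Ha).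
exists (comp RD x g), (rc GR y (inv k ** g)); split; last by rewrite mulrC.
by move/(gsetP RD): Hgp => /(_ p0) H; apply: H.
Qed.

Lemma avoid (I : R -> Prop) b : graded_ideal GR I -> hR GR b ->
  (forall n, (0 < n)%N -> ~ I (b ^+ n)) ->
  exists p, graded_prime_ideal GR p /\ (forall x, I x -> p x) /\ ~ p b.
Proof.
move=> [HI HgI] Hb Hav; have I0 := ideal0 HI.
pose P (X : R -> Prop) := graded_ideal GR (fun r => I r \/ X r) /\
  forall n, (0 < n)%N -> ~ (I (b ^+ n) \/ X (b ^+ n)).
have [X [PX maxX]] : exists X, P X /\ forall Y, classical_sets.proper X Y -> ~ P Y.
  apply: classical_sets.Zorn_bigcup => F FP Ftot.
  rewrite /classical_sets.bigcup /classical_sets.mkset /=.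
  have common : forall x y, (I x \/ exists2 i, F i & i x) -> (I y \/ exists2 i, F i & i y) ->
     (I x /\ I y) \/ exists2 X, F X & ((I x \/ X x) /\ (I y \/ X y)).
    move=> x y [Ix|[X1 F1 X1x]] [Iy|[X2 F2 X2y]]; first (by left); right.
    - by exists X2 => //; split; [left|right].
    - by exists X1 => //; split; [right|left].
    case: (Ftot _ _ F1 F2) => S.
    - by exists X2 => //; split; right => //; apply: S.
    - by exists X1 => //; split; right => //; apply: S.
  split.
    split; first split; first by left.
    + split.
      * move=> x y Hx Hy; case: (common _ _ Hx Hy) => [[Ix Iy]|[X FX [Hx' Hy']]].
          by left; apply: idealD.
        have [[HX _] _] := FP X FX.
        by case: (idealD HX Hx' Hy') => H; [left|right; exists X].
      * move=> r x [Ix|[X FX Xx]]; first by left; apply: idMul.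
        have [[HX _] _] := FP X FX.
        by case: (idMul r HX (or_intror Xx)) => H; [left|right; exists X].
    + apply/(gsetP RD); first by left.
      move=> x [Ix|[X FX Xx]] g.
        by left; move/(gsetP RD): HgI => /(_ I0) H; apply: H.
      have [[HX HgX] _] := FP X FX.
      move/(gsetP RD): HgX => /(_ (or_introl I0)) H.
      by case: (H x (or_intror Xx) g) => H'; [left|right; exists X].
  move=> n n0 [In|[X FX Xn]]; first exact: (Hav n n0).
  by have [_ H] := FP X FX; apply: (H n n0); right.
pose p := fun r => I r \/ X r.
have [[Hp Hgp] Havp] := PX.
have Hnot : forall a, hR GR a -> ~ p a -> exists n, (0 < n)%N /\ exists x y, p x /\ b ^+ n = x + y * a.
  move=> a [k Ha] npa.
  pose Ja := fun r => exists x y, p x /\ r = x + y * a.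
  have HJa := Ja_ideal (conj Hp Hgp) Ha.
  have E : (fun r => I r \/ Ja r) = Ja.
    apply: predext => r; split; last by right.
    case=> // Ir; exists r, 0; split; [by left|by rewrite mul0r addr0].
  have NP : ~ P Ja.
    apply: maxX; split.
      by move=> r Xr; exists r, 0; split; [right|rewrite mul0r addr0].
    move=> H; apply: npa; right; apply: H; exists 0, 1; split; [by left|by rewrite mul1r add0r].
  rewrite /P E in NP.
  apply: NNPP => Hn; apply: NP; split => // n n0 [In|Jn]; first exact: (Hav n n0).
  by apply: Hn; exists n; split.
exists p; split; last split.
- split; first by split.
  split.
    move=> p1; apply: (Havp 1%N) => //; rewrite expr1.
    by have := idMul b Hp p1; rewrite mulr1.
  move=> a c Ha Hc Hac; apply: NNPP => H.
  have [npa npc] : ~ p a /\ ~ p c by split => Hx; apply: H; [left|right].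
  case: (Hnot a Ha npa) => n [n0 [x [y [px En]]]].
  case: (Hnot c Hc npc) => m [m0 [x' [y' [px' Em]]]].
  have nm0 : (0 < n + m)%N by rewrite addn_gt0 n0.
  refine (Havp _ nm0 _).
  rewrite exprD En Em mulrDl; apply: (idealD (I:=p) Hp).
    exact: (idealMr _ Hp px).
  rewrite mulrDr; apply: (idealD (I:=p) Hp).
    exact: (idMul _ Hp px').
  rewrite mulrACA; exact: (idMul _ Hp Hac).
- by move=> x Ix; left.
move=> pb; apply: (Havp 1%N) => //; rewrite expr1; exact: pb.
Qed.

Definition phi (Q : M -> Prop) := Gr GR (colon Q).

Lemma Ann_colon (Q : M -> Prop) r : is_submodule Q -> Ann M r -> colon Q r.
Proof. by move=> HQ Hr m; rewrite Hr; apply: sub0. Qed.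

Lemma phi_not1 Q : qpSpec GM Q -> ~ phi Q 1.
Proof.
move=> [[[HQ HgQ] [[m nQm] _]] _] H.
have [HC _] := colon_ideal (conj HQ HgQ).
case: (Gr_rad HC H) => n [_ Hn]; apply: nQm; move: (Hn m); by rewrite expr1n scale1r.
Qed.

Lemma avoid_Gr (I : R -> Prop) x : graded_ideal GR I -> ~ Gr GR I x ->
  exists p, graded_prime_ideal GR p /\ (forall y, I y -> p y) /\ ~ p x.
Proof.
move=> HI nG; have I0 := ideal0 HI.1.
have [g Hg] : exists g, ~ rad I (rc GR x g).
  by apply: NNPP => H; apply: nG; apply/GrE => // g; apply: NNPP => H'; apply: H; exists g.
have [p [Hp [Ip npb]]] : exists p, graded_prime_ideal GR p /\ (forall y, I y -> p y) /\ ~ p (rc GR x g).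
  apply: avoid => //; first by exists g; apply: rcA.
  by move=> n n0 In; apply: Hg; exists n.
exists p; split => //; split => // px; apply: npb.
have [[[Hp0 _] Hgp] _] := Hp.
by move/(gsetP RD): Hgp => /(_ Hp0) H; apply: H.
Qed.

Lemma phi_prime Q : qpSpec GM Q -> graded_prime_ideal GR (phi Q).
Proof.
move=> HQs; have [[[HQ HgQ] [Hprop Hqp]] Hful] := HQs.
have HC := colon_ideal (conj HQ HgQ); have C0 := ideal0 HC.1.
split; first exact: Gr_ideal.
split; first exact: phi_not1.
move=> a b [ka Ha] [kb Hb] Hab.
have Hab' : rcomp GR (ka ** kb) (a * b) by apply: rcomp_mul.
case/(Gr_hom C0 Hab'): Hab => n [n0 Hn].
case: (classic (phi Q b)) => Pb; first by right.
left; apply: NNPP => Pa.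
have [p [Hp [Cp npb]]] := avoid_Gr HC Pb.
have [P [HPfull [QP CP]]] := Hful p Hp Cp.
have [[HP HgP] [Pprop HPpr]] := HPfull.
case: Pprop => m0 nm0; apply: nm0.
apply: (all_hom (GM:=GM) HP) => m [h Hm].
case: n n0 Hn => // n _ Hn.
have Hq : Q (a ^+ n.+1 *: (b ^+ n.+1 *: m)) by rewrite scalerA -exprMn; apply: Hn.
have [kbn Hbn] := hR_exp n (ex_intro _ kb Hb).
have hbm : hM GM (b ^+ n.+1 *: m) by exists (kbn ** h); apply: mcomp_scale.
case: (Hqp _ _ (hR_exp n (ex_intro _ ka Ha)) hbm Hq) => H.
  have [kan Han] := hR_exp n (ex_intro _ ka Ha).
  case/(Gr_hom C0 Han): H => k [k0 Hk]; exfalso; apply: Pa; apply/(Gr_hom C0 Ha).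
  by exists (n.+1 * k)%N; split; [rewrite muln_gt0 k0|rewrite exprM].
have Pbm : P (b ^+ n.+1 *: m) := H P HPfull QP.
case: (HPpr _ _ (ex_intro _ kbn Hbn) (ex_intro _ h Hm) Pbm) => // Cb.
exfalso; apply: npb; rewrite -CP in Hp *.
by apply: (prime_rad Hp); [exists kb|exists n.+1].
Qed.

Definition Ka (a : R) : M -> Prop := fun m => exists m', m = a *: m'.

Lemma Ka_graded a : hR GR a -> graded_submodule GM (Ka a).
Proof.
move=> [k Ha].
have K0 : Ka a 0 by exists 0; rewrite scaler0.
split; first split => //; first split.
- by move=> x y [x' ->] [y' ->]; exists (x' + y'); rewrite scalerDr.
- by move=> r x [x' ->]; exists (r *: x'); rewrite !scalerA mulrC.
apply/(gsetP MD) => // x [x' ->] g.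
by exists (mc GM x' (inv k ** g)); rewrite -[comp MD _ _]/(mc GM _ _) (mc_scalel GM _ _ Ha).
Qed.

Lemma Ka_V a Q : hR GR a -> qpSpec GM Q -> (qpV_M GM (Ka a) Q <-> phi Q a).
Proof.
move=> Ha HQs; split.
  case=> _ H; apply: H; apply: Gr_incl; first exact: colon_ideal (Ka_graded Ha).
  by move=> m; exists m.
move=> Pa; split => // r Hr; apply: NNPP => nr.
have [[[HQ HgQ] _] Hful] := HQs.
have HC := colon_ideal (conj HQ HgQ).
have [p [Hp [Cp npr]]] := avoid_Gr HC nr.
have [P [[[HP HgP] _] [QP CP]]] := Hful p Hp Cp.
have pa : p a by apply: (Gr_prime Hp); apply: (Gr_mono Cp).
apply: npr; apply: (Gr_prime Hp); apply: (Gr_mono _ Hr) => x Hx.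
rewrite -CP; move=> m; case: (Hx m) => m' ->.
by rewrite -CP in pa; apply: pa.
Qed.

Lemma irr_of (A : (M -> Prop) -> Prop) Q0 : (forall Q, A Q -> qpSpec GM Q) -> A Q0 ->
  (forall Q, A Q -> forall x, phi Q0 x -> phi Q x) -> qp_irreducible GM A.
Proof.
move=> HA AQ0 Hphi; split => //; split; first by exists Q0.
move=> A1 A2 [K1 [_ ->]] [K2 [_ ->]] Hcov.
case: (Hcov _ AQ0) => [[_ H]|[_ H]]; [left|right]; move=> Q AQ; split; try exact: HA;
  by move=> x Hx; apply: (Hphi Q AQ); apply: H.
Qed.

Definition JC (C : (M -> Prop) -> Prop) (r : R) := forall Q, C Q -> phi Q r.

Lemma JC_prime C : qp_irreducible GM C -> graded_prime_ideal GR (JC C) /\ (forall r, Ann M r -> JC C r).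
Proof.
move=> [CS [[Q1 CQ1] Hirr]].
have Hp : forall Q, C Q -> graded_prime_ideal GR (phi Q) by move=> Q CQ; apply: phi_prime; apply: CS.
have J0 : JC C 0 by move=> Q CQ; have [[H _] _] := Hp Q CQ; apply: ideal0 H.
split; last first.
  move=> r Hr Q CQ; have [[[HQ HgQ] _] _] := CS Q CQ.
  rewrite /phi; apply: Gr_incl; first exact: (colon_ideal (conj HQ HgQ)).
  exact: Ann_colon.
split; first split; first split => //; first split.
- by move=> x y Hx Hy Q CQ; have [[H _] _] := Hp Q CQ; exact: (idealD H (Hx Q CQ) (Hy Q CQ)).
- by move=> r x Hx Q CQ; have [[H _] _] := Hp Q CQ; exact: (idMul r H (Hx Q CQ)).
- apply/(gsetP RD) => // x Hx g Q CQ; have [[H0 Hg] _] := Hp Q CQ.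
  by move/(gsetP RD): Hg => /(_ (ideal0 H0)) Hg; apply: Hg; apply: Hx.
split; first by move=> H; apply: (phi_not1 (CS Q1 CQ1)); apply: H.
move=> a b Ha Hb Hab.
have cl : forall c, hR GR c -> qp_closed GM (qpV_M GM (Ka c)).
  by move=> c Hc; exists (Ka c); split => //; apply: Ka_graded.
case: (Hirr _ _ (cl a Ha) (cl b Hb)).
- move=> Q CQ; have [_ [_ Hpr]] := Hp Q CQ.
  by case: (Hpr a b Ha Hb (Hab Q CQ)) => H; [left; apply/(Ka_V Ha (CS Q CQ))|right; apply/(Ka_V Hb (CS Q CQ))].
- by move=> H; left => Q CQ; apply/(Ka_V Ha (CS Q CQ)); apply: H.
- by move=> H; right => Q CQ; apply/(Ka_V Hb (CS Q CQ)); apply: H.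
Qed.

Lemma pM_V (p : R -> Prop) Q0 : graded_prime_ideal GR p -> qpSpec GM Q0 -> phi Q0 = p ->
  forall Q : M -> Prop, qpV_M GM (idealM (M:=M) p) Q <-> qpSpec GM Q /\ forall x, p x -> phi Q x.
Proof.
move=> Hp HQ0 E.
have [[[HQ HgQ] _] Hful] := HQ0.
have HC := colon_ideal (conj HQ HgQ).
have Cp : forall x, colon Q0 x -> p x by move=> x Hx; rewrite -E; apply: Gr_incl.
have [P [[[HP HgP] _] [QP CP]]] := Hful p Hp Cp.
have EE : forall x, Gr GR (colon (idealM (M:=M) p)) x <-> p x.
  move=> x; split.
    move=> H; apply: (Gr_prime Hp); apply: (Gr_mono _ H) => y Hy; rewrite -CP => m.
    case: (Hy m) => s [Hs ->]; apply: sum_closed; [exact: sub0|by move=> ? ?; apply: subD|].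
    by move=> i Hi; move: (Hs i Hi); rewrite -CP; apply.
  move=> px; apply: (Gr_mono (I := p)); last by apply: Gr_incl => //; case: Hp.
  move=> y py m; exists [:: (y, m)]; split; first by move=> i [<-|[]].
  by rewrite big_cons big_nil addr0.
move=> Q; split.
  by case=> HQs H; split => // x px; apply: H; apply/EE.
by case=> HQs H; split => // x /EE; apply: H.
Qed.

End Main.

Theorem theorem4p11 (G : Type) (GL : group_law G) (R : comPzRingType)
  (GR : graded_ring GL R) (M : lmodType R) (GM : graded_module GR M) :
  graded_qprimaryful GM ->
  qp_irreducible_component GM = Phi GM.
Proof.
move=> Hqp.
have M0case : (forall m : M, m = 0) -> forall A, ~ qp_irreducible_component GM A /\ ~ Phi GM A.
  move=> M0 A; split.
    move=> [[AS [[Q AQ] _]] _]; have [[[HQ _] [[m nm] _]] _] := AS Q AQ.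
    by apply: nm; rewrite (M0 m); apply: sub0.
  move=> [q [[[_ [nq1 _]] Aq] _]]; apply: nq1; apply: Aq => m; exact: M0.
apply: predext => A; case: Hqp => [M0|[Mne Hq]].
  by have [H1 H2] := M0case M0 A; split.
have prime_qp : forall p, V_R GR (Ann M) p -> qpV_R GR (Ann M) p.
  move=> p [[Hgp [np1 Hpr]] Ap]; split => //; split => //; split => //.
  move=> a b Ha Hb Hab; case: (Hpr a b Ha Hb Hab) => H; [left|right]; apply: Gr_incl => //.
have GrP : forall p, graded_prime_ideal GR p -> Gr GR p = p.
  move=> p Hp; apply: predext => x; split; first exact: Gr_prime.
  by apply: Gr_incl; case: Hp.
have realize : forall p, V_R GR (Ann M) p -> exists Q0, qpSpec GM Q0 /\ phi GR Q0 = p.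
  move=> p Hp; case: (Hq p (prime_qp p Hp)) => Q0 [HQ0 E]; exists Q0; split => //.
  by rewrite /phi E GrP //; case: Hp.
split.
- move=> [HirrA HmaxA].
  have [HJ HAnnJ] := JC_prime HirrA.
  have [AS _] := HirrA.
  have claim : forall p, V_R GR (Ann M) p -> (forall x, p x -> JC GR A x) ->
      p = JC GR A /\ A = qpV_M GM (idealM p).
    move=> p Hp pJ; have [Q0 [HQ0 E]] := realize p Hp.
    have HV := pM_V (proj1 Hp) HQ0 E.
    have Birr : qp_irreducible GM (qpV_M GM (idealM p)).
      apply: (irr_of (Q0 := Q0)).
      - by move=> Q /HV [].
      - by apply/HV; split => // x; rewrite E.
      by move=> Q /HV [_ H] x; rewrite E; apply: H.
    have AB : Defs.subset A (qpV_M GM (idealM p)).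
      by move=> Q AQ; apply/HV; split; [exact: AS|move=> x px; apply: pJ].
    have BA := HmaxA _ Birr AB.
    have AQ0 : A Q0 by rewrite -BA; apply/HV; split => // x; rewrite E.
    split; last by rewrite BA.
    apply: predext => x; split; first exact: pJ.
    by move=> Jx; rewrite -E; apply: Jx.
  have VJ : V_R GR (Ann M) (JC GR A) by split.
  have GJ := GrP _ HJ.
  exists (JC GR A); split; first exact: prime_qp.
  rewrite GJ; split; last by case: (claim _ VJ (fun x h => h)).
  split => // p Hp pJ; by case: (claim p Hp pJ).
- move=> [q [Hqv [[HVp Hmin] ->]]].
  case: (Hq q Hqv) => Q0 [HQ0 E0].
  have HV := pM_V (proj1 HVp) HQ0 E0.
  have Airr : qp_irreducible GM (qpV_M GM (idealM (Gr GR q))).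
    apply: (irr_of (Q0 := Q0)).
    - by move=> Q /HV [].
    - by apply/HV; split => // x; rewrite /phi E0.
    by move=> Q /HV [_ H] x; rewrite /phi E0; apply: H.
  split => // B Birr AB.
  have [HJ HAnnJ] := JC_prime Birr.
  have BQ0 : B Q0 by apply: AB; apply/HV; split => // x; rewrite /phi E0.
  have EJ : JC GR B = Gr GR q.
    apply: Hmin; first by split.
    by move=> x Jx; rewrite -E0; apply: Jx.
  apply: predext => Q; split; last by apply: AB.
  move=> BQ; apply/HV; split; first by case: Birr => BS _; apply: BS.
  by move=> x; rewrite -EJ; move=> Jx; apply: Jx.
Qed.
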